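(* Let $N,N_1,N_2$ be distribution functions such that $N=(N_1+N_2)/2$ and $\mathbf{u}(N_1),\mathbf{u}(N_2)<\infty$. Put ${\scriptstyle\Delta}N=N_1-N$ and $${\scriptstyle\Delta}\mathbf{u}=\int_0^\infty{\scriptstyle\Delta}N(t)\,dt,\qquad \mathbf{u}_{\scriptstyle\Delta}=\int_0^\infty|{\scriptstyle\Delta}N(t)|\,dt,\qquad \mathbf{u}=\mathbf{u}(N).$$ Then $$\mathbf{u}^*(N)-\frac{\mathbf{u}^*(N_1)+\mathbf{u}^*(N_2)}{2}\ge\frac12\cdot\frac{(\mathbf{u}_{\scriptstyle\Delta})^2}{\mathbf{u}}\ge\frac12\cdot\frac{({\scriptstyle\Delta}\mathbf{u})^2}{\mathbf{u}}$$ (whenever $\mathbf{u}>0$, so that the right-hand sides are defined).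
   Context: A distribution function is a nonincreasing function $N:[0,\infty)\to[0,1]$. For such $N$ we set $$\mathbf{u}(N)=\int_0^\infty N(t)\,dt,\qquad \mathbf{u}^*(N)=\int_0^\infty\psi_0(N(t))\,dt,\qquad \psi_0(s)=s\ln(e/s).$$ *)

(* Defs.v *)
From HB Require Import structures.
From mathcomp Require Import all_boot all_order all_algebra.
From mathcomp Require Import all_classical all_reals all_analysis.
Set Implicit Arguments. Unset Strict Implicit. Unset Printing Implicit Defensive.
Import Order.TTheory GRing.Theory Num.Theory.
Local Open Scope classical_set_scope.
Local Open Scope ring_scope.

(* A distribution function: nonincreasing N : [0,oo) -> [0,1]
   (represented as a function R -> R whose values off [0,oo) are irrelevant). *)
Definition distribution_function {R : realType} (N : R -> R) : Prop :=
  (forall t, 0 <= t -> 0 <= N t <= 1) /\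
  (forall s t, 0 <= s -> s <= t -> N t <= N s).

(* psi0(s) = s ln(e/s), with psi0(0) = 0 (ln 0 = 0 and 0 * _ = 0 in MathComp). *)
Definition psi0 {R : realType} (s : R) : R := s * ln (expR 1 / s).

Definition uN {R : realType} (N : R -> R) : \bar R :=
  (\int[lebesgue_measure]_(t in `[0%R, +oo[%classic) (N t)%:E)%E.

Definition ustar {R : realType} (N : R -> R) : \bar R :=
  (\int[lebesgue_measure]_(t in `[0%R, +oo[%classic) (psi0 (N t))%:E)%E.

(* Main.v *)
Require Import Defs.
From HB Require Import structures.
From mathcomp Require Import all_boot all_order all_algebra.
From mathcomp Require Import all_classical all_reals all_analysis.
From mathcomp Require Import ring lra measurable_realfun.
Import Order.TTheory GRing.Theory Num.Theory.
Local Open Scope classical_set_scope.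
Local Open Scope ring_scope.

Section S.
Variable R : realType.

Lemma d1p (y : R) : is_derive y 1 (fun z : R => 1 + z) 1.
Proof.
have -> : (fun z : R => 1 + z) = cst 1 + id by apply/funext.
apply: is_derive_eq; by rewrite add0r.
Qed.

Lemma d1m (y : R) : is_derive y 1 (fun z : R => 1 - z) (-1).
Proof.
have -> : (fun z : R => 1 - z) = cst 1 - id by apply/funext.
apply: is_derive_eq; by rewrite sub0r.
Qed.

Lemma dlnp (y : R) : -1 < y -> is_derive y 1 (fun z : R => ln (1 + z)) (1 + y)^-1.
Proof.
move=> hy.
change (is_derive y 1 (@ln R \o (fun z => 1 + z)) (1 + y)^-1).
apply: is_derive_eq.
  apply: (is_derive1_comp (f := @ln R) (g := fun z => 1 + z)).
  have hy1 : (0:R) < 1 + y by lra.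
  exact: (@is_derive1_ln R (1 + y) hy1).
by rewrite add0r !mulr1.
Qed.

Lemma dlnm (y : R) : y < 1 -> is_derive y 1 (fun z : R => ln (1 - z)) (- (1 - y)^-1).
Proof.
move=> hy.
change (is_derive y 1 (@ln R \o (fun z => 1 - z)) (- (1 - y)^-1)).
apply: is_derive_eq.
  apply: (is_derive1_comp (f := @ln R) (g := fun z => 1 - z)).
  by apply: is_derive1_ln; rewrite subr_gt0.
by rewrite add0r mul1r mulrN1.
Qed.

Lemma inv_ge (p a : R) : 0 < p -> a * p <= 1 -> a <= p^-1.
Proof. by move=> p0 h; rewrite -[p^-1]mul1r ler_pdivlMr. Qed.

Lemma G_ge0 (x : R) : 0 <= x -> x < 1 -> 2 * x <= ln (1 + x) - ln (1 - x).
Proof.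
move=> x0 x1.
pose g := fun z : R => ln (1 + z) - ln (1 - z) - 2 * z.
pose dg := fun z : R => (1 + z)^-1 + (1 - z)^-1 - 2.
have Dg (z : R) : -1 < z -> z < 1 -> is_derive z 1 g (dg z).
  move=> z1 z2.
  have -> : g = (fun z : R => ln (1 + z)) - (fun z : R => ln (1 - z)) - (cst (2:R) * (@id R)) by apply/funext.
  apply: is_derive_eq.
    apply: is_deriveB; first apply: is_deriveB.
    - exact: dlnp.
    - exact: dlnm.
  by rewrite /dg /GRing.scale /= mulr0 addr0 mulr1 opprK.
have := @MVT_segment R g dg 0 x x0.
case.
- move=> z; rewrite in_itv /= => /andP[z0 zx]; apply: Dg; lra.
- apply: derivable_within_continuous => z; rewrite in_itv /= => /andP[z0 zx].
  have : is_derive z 1 g (dg z) by apply: Dg; lra.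
  by case.
move=> c; rewrite in_itv /= => /andP[c0 cx] E.
have h1 : 1 - c <= (1 + c)^-1 by apply: inv_ge; nra.
have h2 : 1 + c <= (1 - c)^-1 by apply: inv_ge; nra.
have : 0 <= g x - g 0 by rewrite E; apply: mulr_ge0; rewrite /dg; lra.
by rewrite /g addr0 subr0 ln1 mulr0 !subr0; lra.
Qed.

Lemma F_ge0 (x : R) : 0 <= x -> x < 1 ->
  x ^+ 2 <= (1 + x) * ln (1 + x) + (1 - x) * ln (1 - x).
Proof.
move=> x0 x1.
pose g := fun z : R => (1 + z) * ln (1 + z) + (1 - z) * ln (1 - z) - z ^+ 2.
pose dg := fun z : R => ln (1 + z) - ln (1 - z) - 2 * z.
have Dg (z : R) : -1 < z -> z < 1 -> is_derive z 1 g (dg z).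
  move=> z1 z2.
  have -> : g = (fun z : R => 1 + z) * (fun z : R => ln (1 + z))
     + (fun z : R => 1 - z) * (fun z : R => ln (1 - z)) - (@id R) ^+ 2 by apply/funext.
  apply: is_derive_eq.
    apply: is_deriveB; first apply: is_deriveD.
    - exact: (is_deriveM (d1p z) (dlnp z z1)).
    - exact: (is_deriveM (d1m z) (dlnm z z2)).
  have sc (a b : R) : a *: b = a * b by [].
  rewrite /dg /= !sc !mulr1 mulrN mulfV; last by apply: lt0r_neq0; lra.
  rewrite mulfV; last by apply: lt0r_neq0; lra.
  rewrite expr1; lra.
have := @MVT_segment R g dg 0 x x0.
case.
- move=> z; rewrite in_itv /= => /andP[z0 zx]; apply: Dg; lra.
- apply: derivable_within_continuous => z; rewrite in_itv /= => /andP[z0 zx].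
  have : is_derive z 1 g (dg z) by apply: Dg; lra.
  by case.
move=> c; rewrite in_itv /= => /andP[c0 cx] E.
have h1 := G_ge0 c c0 (le_lt_trans cx x1).
have : 0 <= g x - g 0 by rewrite E; apply: mulr_ge0; rewrite /dg; lra.
rewrite /g addr0 subr0 ln1 !mulr0 !addr0 expr0n /= subr0; lra.
Qed.

Lemma ln2_ge : 1 <= 2 * ln (2 : R).
Proof.
have := @le_ln1Dx R (- 2^-1).
have -> : 1 + - 2^-1 = (2 : R)^-1 by field.
rewrite lnV ?posrE //; move=> h; have := h ltac:(lra); lra.
Qed.

Lemma psi0E (s : R) : 0 <= s -> psi0 s = s - s * ln s.
Proof.
rewrite le_eqVlt => /predU1P[<-|s0]; first by rewrite /psi0 !mul0r subr0.
rewrite /psi0 ln_div ?posrE ?expR_gt0 // expRK; lra.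
Qed.

Lemma psi0_ge0 (s : R) : 0 <= s -> s <= 1 -> 0 <= psi0 s.
Proof.
move=> s0 s1; rewrite psi0E //; have := ln_le0 s1; nra.
Qed.

Lemma gap_mx (a b m x : R) : 0 < m -> 0 <= x -> x < 1 -> a = m * (1 + x) -> b = m * (1 - x) ->
  (a - b) ^+ 2 / (4 * (a + b)) <= psi0 ((a + b) / 2) - (psi0 a + psi0 b) / 2.
Proof.
move=> m0 x0 x1 -> ->.
have -> : (m * (1 + x) + m * (1 - x)) / 2 = m by field.
have -> : (m * (1 + x) - m * (1 - x)) ^+ 2 / (4 * (m * (1 + x) + m * (1 - x))) = m * x ^+ 2 / 2.
  by field; apply/eqP => h; lra.
rewrite !psi0E; try nra.
rewrite !lnM ?posrE; try lra.
have h := F_ge0 x x0 x1.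
have h2 : 0 <= m * ((1 + x) * ln (1 + x) + (1 - x) * ln (1 - x) - x^+2).
  by apply: mulr_ge0; lra.
nra.
Qed.

Lemma gap_ab (a b : R) : 0 <= a -> 0 <= b -> 0 < a + b ->
  (a - b) ^+ 2 / (4 * (a + b)) <= psi0 ((a + b) / 2) - (psi0 a + psi0 b) / 2.
Proof.
wlog ba : a b / b <= a.
  move=> H a0 b0 ab; case: (leP b a) => [h|h]; first exact: H.
  have := H b a (ltW h) b0 a0 ltac:(lra).
  by rewrite (addrC b a) (addrC (psi0 b)) -(sqrrN (b - a)) opprB.
move=> a0 b0 ab.
have [b00|bp] := eqVneq b 0.
  subst b; rewrite !addr0 subr0.
  have -> : a ^+ 2 / (4 * a) = a / 4 by field; apply/eqP; lra.
  rewrite !psi0E ?mul0r ?subr0 ?addr0; try lra.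
  rewrite ln_div ?posrE; try lra.
  have := ln2_ge; nra.
have b1 : 0 < b by rewrite lt_def bp.
apply: (@gap_mx a b ((a + b) / 2) ((a - b) / (a + b))).
- lra.
- apply: divr_ge0; lra.
- by rewrite ltr_pdivrMr //; lra.
- field; apply/eqP; lra.
- field; apply/eqP; lra.
Qed.

Lemma pointwise (a b c : R) : 0 <= a -> 0 <= b -> 0 <= c ->
  (psi0 a + psi0 b) / 2 + c * `|a - (a + b) / 2| <=
  psi0 ((a + b) / 2) + c ^+ 2 / 2 * ((a + b) / 2).
Proof.
move=> a0 b0 c0.
have p0 : psi0 (0 : R) = 0 by rewrite /psi0 mul0r.
have [ab0|abp] := eqVneq (a + b) 0.
  have az : a = 0 by lra.
  have bz : b = 0 by lra.
  rewrite az bz addr0 mul0r subr0 normr0 mulr0 p0 mulr0; lra.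
have abp' : 0 < a + b by rewrite lt_def abp /=; lra.
have g := gap_ab a b a0 b0 abp'.
set q := (a - b) ^+ 2 / (4 * (a + b)) in g.
have qE : q * (a + b) = (a - b) ^+ 2 / 4 by rewrite /q; field; apply/eqP; lra.
set d := a - (a + b) / 2.
have dE : d = (a - b) / 2 by rewrite /d; field.
have nd : `|d| ^+ 2 = d ^+ 2 by rewrite real_normK // num_real.
have nd0 : 0 <= `|d| by [].
suff : c * `|d| <= q + c ^+ 2 / 2 * ((a + b) / 2) by lra.
rewrite -(ler_pM2r abp').
have : 0 <= (`|d| - c * (a + b) / 2) ^+ 2 by apply: sqr_ge0.
nra.
Qed.

Lemma dist_meas (M : R -> R) : (forall t, 0 <= t -> 0 <= M t <= 1) ->
  (forall s t, 0 <= s -> s <= t -> M t <= M s) ->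
  measurable_fun `[(0:R), +oo[%classic M.
Proof.
move=> _ HM.
apply: (eq_measurable_fun (fun t : R => M (Order.max t 0))).
  move=> t; rewrite inE /= in_itv /= andbT => t0; by rewrite max_l.
apply: nonincreasing_measurable => // s t st.
apply: HM; first by rewrite le_max lexx orbT.
by rewrite ge_max !le_max st lexx !orbT.
Qed.

Lemma dist_psi_meas (M : R -> R) : (forall t, 0 <= t -> 0 <= M t <= 1) ->
  (forall s t, 0 <= s -> s <= t -> M t <= M s) ->
  measurable_fun `[(0:R), +oo[%classic (fun t => psi0 (M t)).
Proof.
move=> H0 HM; have mM := @dist_meas M H0 HM.
apply: (eq_measurable_fun (fun t : R => M t - M t * ln (M t))).
  move=> t; rewrite inE /= in_itv /= andbT => t0.
  by rewrite psi0E //; case/andP: (H0 t t0).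
apply: measurable_funB => //; apply: measurable_funM => //.
exact: measurableT_comp.
Qed.
End S.


Theorem corollary5p2 (R : realType) (N N1 N2 : R -> R) :
  distribution_function N -> distribution_function N1 -> distribution_function N2 ->
  (forall t, 0 <= t -> N t = (N1 t + N2 t) / 2) ->
  (uN N1 < +oo)%E -> (uN N2 < +oo)%E ->
  (0 < uN N)%E ->
  let dN := fun t => N1 t - N t in
  let du := Rintegral lebesgue_measure `[0%R, +oo[%classic dN in
  let uD := Rintegral lebesgue_measure `[0%R, +oo[%classic (fun t => `|dN t|) in
  let u := fine (uN N) in
  ((ustar N1 + ustar N2) * (2^-1)%:E + (2^-1 * (uD ^+ 2 / u))%:E <= ustar N)%E /\
  2^-1 * (du ^+ 2 / u) <= 2^-1 * (uD ^+ 2 / u).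
Proof.
move=> [HN0 HNm] [HN10 HN1m] [HN20 HN2m] HNe u1 u2 u0 dN du uD u.
set D := `[0%R, +oo[%classic : set R.
have mD : measurable D by exact: measurable_itv.
have Dt t : D t -> (0 <= t)%R by rewrite /D /= in_itv /= andbT.
have mN := @dist_meas R N HN0 HNm.
have mN1 := @dist_meas R N1 HN10 HN1m.
have mN2 := @dist_meas R N2 HN20 HN2m.
have N0 t : D t -> (0 <= N t)%R by move=> /Dt /HN0 /andP[].
have N10 t : D t -> (0 <= N1 t)%R by move=> /Dt /HN10 /andP[].
have N20 t : D t -> (0 <= N2 t)%R by move=> /Dt /HN20 /andP[].
have N1' t : D t -> (N t <= 1)%R by move=> /Dt /HN0 /andP[].
have N11 t : D t -> (N1 t <= 1)%R by move=> /Dt /HN10 /andP[].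
have N21 t : D t -> (N2 t <= 1)%R by move=> /Dt /HN20 /andP[].
have mE (f : R -> R) : measurable_fun D f -> measurable_fun D (fun t => (f t)%:E).
  by move=> mf; apply/measurable_EFinP.
have m12 : measurable_fun D (fun t => (N1 t + N2 t)%R).
  exact: measurable_funD.
have i12 : (\int[lebesgue_measure]_(t in D) ((N1 t + N2 t)%R)%:E = uN N1 + uN N2)%E.
  by rewrite /uN -ge0_integralD //; exact: mE.
have i12fin : (\int[lebesgue_measure]_(t in D) ((N1 t + N2 t)%R)%:E < +oo)%E.
  by rewrite i12; exact: lte_add_pinfty.
have NE t : D t -> N t = ((N1 t + N2 t) / 2)%R by move=> /Dt /HNe.
have uNle : (uN N <= uN N1 + uN N2)%E.
  rewrite -i12 /uN; apply: ge0_le_integral => //; try exact: mE.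
  move=> t Dt'; rewrite lee_fin NE //.
    have := N10 t Dt'; have := N20 t Dt'; lra.
have uNfin : uN N \is a fin_num.
  rewrite ge0_fin_numE; last exact: ltW.
  exact: (le_lt_trans uNle (lte_add_pinfty u1 u2)).
have uE : (u%:E = uN N)%E by rewrite /u fineK.
have upos : (0 < u)%R by rewrite /u fine_gt0 // u0 /= -ge0_fin_numE ?ltW.
have mdN : measurable_fun D dN by exact: measurable_funB.
have madN : measurable_fun D (fun t => `|dN t|)%R.
  apply: measurableT_comp; [exact: normr_measurable | exact: mdN].
have dNle t : D t -> (`|dN t| <= N1 t + N2 t)%R.
  move=> Dt'; rewrite /dN NE // ler_norml.
  have := N10 t Dt'; have := N20 t Dt'; move=> a b; apply/andP; split; lra.
have iadN : (\int[lebesgue_measure]_(t in D) (`|dN t|%R)%:E <= uN N1 + uN N2)%E.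
  rewrite -i12; apply: ge0_le_integral => //; try exact: mE.
  all: try by move=> t Dt'; rewrite lee_fin dNle.
have iadNfin : (\int[lebesgue_measure]_(t in D) (`|dN t|%R)%:E)%E \is a fin_num.
  rewrite ge0_fin_numE; last by apply: integral_ge0 => t _; rewrite lee_fin.
  exact: (le_lt_trans iadN (lte_add_pinfty u1 u2)).
have uDE : (uD%:E = \int[lebesgue_measure]_(t in D) (`|dN t|%R)%:E)%E.
  by rewrite /uD /Rintegral fineK.
have uD0 : (0 <= uD)%R.
  by rewrite /uD /Rintegral fine_ge0 //; apply: integral_ge0 => t _; rewrite lee_fin.
have idN := le_abse_integral lebesgue_measure mD (mE _ mdN).
have idNfin : (\int[lebesgue_measure]_(t in D) (dN t)%:E)%E \is a fin_num.
  rewrite -abse_fin_num ge0_fin_numE //.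
  by apply: (le_lt_trans idN); rewrite -ge0_fin_numE //; apply: integral_ge0.
have duuD : (`|du| <= uD)%R.
  rewrite /du /uD /Rintegral -fine_abse //.
  apply: fine_le => //; first by rewrite abse_fin_num.
split; last first.
  have : (du ^+ 2 <= uD ^+ 2)%R.
    move: duuD; rewrite ler_norml => /andP[h1 h2]; nra.
  move=> h; apply: ler_wpM2l; first lra.
  apply: ler_wpM2r => //; rewrite invr_ge0; lra.
pose c := (uD / u)%R.
have c0 : (0 <= c)%R by apply: divr_ge0 => //; exact: ltW.
have pw t : D t -> ((psi0 (N1 t) + psi0 (N2 t)) / 2 + c * `|dN t| <=
     psi0 (N t) + c ^+ 2 / 2 * N t)%R.
  by move=> Dt'; rewrite /dN NE //; apply: pointwise; [exact: N10|exact: N20|].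
have mp := @dist_psi_meas R N HN0 HNm.
have mp1 := @dist_psi_meas R N1 HN10 HN1m.
have mp2 := @dist_psi_meas R N2 HN20 HN2m.
have p0 t : D t -> (0 <= psi0 (N t))%R by move=> Dt'; apply: psi0_ge0; [exact: N0|exact: N1'].
have p10 t : D t -> (0 <= psi0 (N1 t))%R by move=> Dt'; apply: psi0_ge0; [exact: N10|exact: N11].
have p20 t : D t -> (0 <= psi0 (N2 t))%R by move=> Dt'; apply: psi0_ge0; [exact: N20|exact: N21].
have I1 : (\int[lebesgue_measure]_(t in D) ((psi0 (N t) + c ^+ 2 / 2 * N t)%R)%:E
    = ustar N + (c ^+ 2 / 2 * u)%:E)%E.
  transitivity (\int[lebesgue_measure]_(t in D) ((psi0 (N t))%:E + (c ^+ 2 / 2)%:E * (N t)%:E))%E.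
    by apply: eq_integral => t _; rewrite -EFinM -EFinD.
  rewrite ge0_integralD //; try exact: mE; try (by apply: measurable_funeM; exact: mE);
    try (by move=> t Dt'; rewrite lee_fin p0);
    try (by move=> t Dt'; apply: mule_ge0; rewrite lee_fin ?N0 //; apply: divr_ge0 => //; apply: sqr_ge0).
  rewrite ge0_integralZl_EFin //; try exact: mE;
    try (by move=> t Dt'; rewrite lee_fin N0);
    try (by apply: divr_ge0 => //; apply: sqr_ge0).
  by rewrite EFinM uE.
have mdN' : measurable_fun D (fun t => (`|dN t|%R)%:E) by exact: mE.
have I2 : (\int[lebesgue_measure]_(t in D)
     (((psi0 (N1 t) + psi0 (N2 t)) / 2 + c * `|dN t|)%R)%:E
    = (ustar N1 + ustar N2) * (2^-1)%:E + (c * uD)%:E)%E.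
  transitivity (\int[lebesgue_measure]_(t in D)
     (((2^-1)%:E * (psi0 (N1 t))%:E + (2^-1)%:E * (psi0 (N2 t))%:E) + c%:E * (`|dN t|%R)%:E))%E.
    by apply: eq_integral => t _; rewrite -!EFinM -!EFinD mulrDl (mulrC (psi0 (N1 t))) (mulrC (psi0 (N2 t))).
  have h2 : (0 <= 2^-1 :> R)%R by rewrite invr_ge0.
  have hA t : D t -> (0 <= (2^-1)%:E * (psi0 (N1 t))%:E)%E.
    by move=> Dt'; apply: mule_ge0; rewrite lee_fin ?p10.
  have hB t : D t -> (0 <= (2^-1)%:E * (psi0 (N2 t))%:E)%E.
    by move=> Dt'; apply: mule_ge0; rewrite lee_fin ?p20.
  have hC t : D t -> (0 <= c%:E * (`|dN t|%R)%:E)%E.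
    by move=> Dt'; apply: mule_ge0; rewrite lee_fin.
  have mA : measurable_fun D (fun t => (2^-1)%:E * (psi0 (N1 t))%:E)%E.
    by apply: measurable_funeM; exact: mE.
  have mB : measurable_fun D (fun t => (2^-1)%:E * (psi0 (N2 t))%:E)%E.
    by apply: measurable_funeM; exact: mE.
  have mC : measurable_fun D (fun t => c%:E * (`|dN t|%R)%:E)%E.
    by apply: measurable_funeM; exact: mE.
  rewrite ge0_integralD //; last first.
    by apply: emeasurable_funD.
    by move=> t Dt'; apply: adde_ge0; [exact: hA|exact: hB].
  rewrite ge0_integralD // !ge0_integralZl_EFin //; try exact: mE;
    try (by move=> t Dt'; rewrite lee_fin ?p10 ?p20).
  rewrite -uDE.
  have s10 : (0 <= ustar N1)%E by apply: integral_ge0 => t Dt'; rewrite lee_fin; exact: p10.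
  have s20 : (0 <= ustar N2)%E by apply: integral_ge0 => t Dt'; rewrite lee_fin; exact: p20.
  rewrite EFinM ge0_muleDl // (muleC (ustar N1)) (muleC (ustar N2)).
  by [].
have H : (\int[lebesgue_measure]_(t in D)
     (((psi0 (N1 t) + psi0 (N2 t)) / 2 + c * `|dN t|)%R)%:E <=
   \int[lebesgue_measure]_(t in D) ((psi0 (N t) + c ^+ 2 / 2 * N t)%R)%:E)%E.
  apply: ge0_le_integral => //.
  all: try (by move=> t Dt'; rewrite lee_fin; apply: addr_ge0;
      [apply: divr_ge0 => //; apply: addr_ge0; [exact: p10|exact: p20]|exact: mulr_ge0]).
  all: try (by move=> t Dt'; rewrite lee_fin; exact: pw).
  all: try (by apply: mE; apply: measurable_funD;
      [apply: measurable_funM => //; exact: measurable_funD | apply: measurable_funM]).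
  all: try (by apply: mE; apply: measurable_funD => //; apply: measurable_funM).
move: H; rewrite I1 I2.
have key : (c * uD = 2^-1 * (uD ^+ 2 / u) + c ^+ 2 / 2 * u)%R.
  by rewrite /c; field; apply/eqP; lra.
by rewrite key EFinD addeA leeD2rE.
Qed.
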